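(* Let $n\ge2$ and define $\mathscr{G}_{1,n}:=\{A=[a_{j,k}]\in\mathbb{C}^{n\times n}: \widehat{A}\text{ is non-derogatory and }(a_{2,1},\dots,a_{n,1})^T\text{ is a cyclic vector of }\widehat{A}\}$. Let $A=[a_{j,k}],B=[b_{j,k}]\in\mathscr{G}_{1,n}$ with $\pi_n(A)=\pi_n(B)$. If $\widehat{A}=\widehat{B}$ and $(a_{2,1},\dots,a_{n,1})=(b_{2,1},\dots,b_{n,1})$, then $(a_{1,2},\dots,a_{1,n})=(b_{1,2},\dots,b_{1,n})$.
   Context: For $A\in\mathbb{C}^{n\times n}$, $\widehat{A}$ denotes the $(n-1)\times(n-1)$ matrix obtained by deleting the first row and column of $A$. A matrix $X\in\mathbb{C}^{k\times k}$ is non-derogatory if it has a cyclic vector $v$ (i.e. $v,Xv,\dots,X^{k-1}v$ span $\mathbb{C}^k$). $\mathscr{I}^j$ is the set of increasing $j$-tuples in $\{1,\dots,n\}$, $A_I$ the principal submatrix indexed by $I$. The map $\pi_n=(X,Y):\mathbb{C}^{n\times n}\to\mathbb{C}^n\times\mathbb{C}^{n-1}$ is $X_1(A)=a_{1,1}$, $X_j(A)=\sum_{I\in\mathscr{I}^j:i_1=1}\det(A_I)$ ($2\le j\le n$), $Y_j(A)=\sum_{I\in\mathscr{I}^j:i_1\ge2}\det(A_I)$ ($1\le j\le n-1$). *)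

(* Defs.v *)
From HB Require Import structures.
From mathcomp Require Import all_boot all_order all_algebra.
Set Implicit Arguments. Unset Strict Implicit. Unset Printing Implicit Defensive.
Import Order.TTheory GRing.Theory Num.Theory.
Local Open Scope ring_scope.

Section Defs.
Variable R : numClosedFieldType.

Definition mxhat m (A : 'M[R]_(m.+1)) : 'M[R]_m :=
  \matrix_(i < m, j < m) A (lift ord0 i) (lift ord0 j).

Definition firstcol m (A : 'M[R]_(m.+1)) : 'cV[R]_m :=
  \col_(i < m) A (lift ord0 i) ord0.

Definition firstrow m (A : 'M[R]_(m.+1)) : 'rV[R]_m :=
  \row_(j < m) A ord0 (lift ord0 j).

Definition krylov k (X : 'M[R]_k) (v : 'cV[R]_k) : 'M[R]_k :=
  \matrix_(i < k, j < k) (X ^+ i *m v) j ord0.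

Definition cyclic_vector k (X : 'M[R]_k) (v : 'cV[R]_k) : Prop :=
  row_full (krylov X v).

Definition non_derogatory k (X : 'M[R]_k) : Prop :=
  exists v : 'cV[R]_k, cyclic_vector X v.

Definition pminor k (A : 'M[R]_k) (I : {set 'I_k}) : R :=
  \det (\matrix_(i < #|I|, j < #|I|) A (enum_val i) (enum_val j)).

Definition piX_coord m (j : nat) (A : 'M[R]_(m.+1)) : R :=
  if j == 1%N then A ord0 ord0
  else \sum_(I : {set 'I_(m.+1)} | (#|I| == j) && (ord0 \in I)) pminor A I.

Definition piY_coord m (j : nat) (A : 'M[R]_(m.+1)) : R :=
  \sum_(I : {set 'I_(m.+1)} | (#|I| == j) && (ord0 \notin I)) pminor A I.

Definition pi_map m (A : 'M[R]_(m.+1)) : 'rV[R]_(m.+1) * 'rV[R]_m :=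
  (\row_(j < m.+1) piX_coord j.+1 A, \row_(j < m) piY_coord j.+1 A).

Definition in_G1 m (A : 'M[R]_(m.+1)) : Prop :=
  non_derogatory (mxhat A) /\ cyclic_vector (mxhat A) (firstcol A).

End Defs.

(* Main.v *)
Require Import Defs.
From HB Require Import structures.
From mathcomp Require Import all_boot all_order all_algebra all_fingroup.
From mathcomp Require Import ring zify.
Import GRing.Theory Num.Theory.
Local Open Scope ring_scope.

Section Emb.
Variables (I T : finType) (g : I -> T) (ginj : injective g).

Definition emb_fun (s : {perm I}) (x : T) : T :=
  if [pick i | g i == x] is Some i then g (s i) else x.

Lemma imgP x : {i | g i = x} + {forall i, g i != x}.
Proof.
case: (pickP (fun i => g i == x)) => [i /eqP hi|h]; first by left; exists i.
by right=> i; rewrite h.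
Qed.

Lemma emb_fun_g s i : emb_fun s (g i) = g (s i).
Proof.
rewrite /emb_fun; case: pickP => [j /eqP/ginj -> //|/(_ i)].
by rewrite eqxx.
Qed.

Lemma emb_fun_out s x : (forall i, g i != x) -> emb_fun s x = x.
Proof.
move=> h; rewrite /emb_fun; case: pickP => [j hj|//].
by rewrite (negbTE (h j)) in hj.
Qed.

Lemma emb_fun_inj s : injective (emb_fun s).
Proof.
move=> x y; case: (imgP x) => [[i <-]|hx]; case: (imgP y) => [[j <-]|hy].
- by rewrite !emb_fun_g => /ginj/perm_inj ->.
- by rewrite emb_fun_g (emb_fun_out _ _ hy) => E; have := hy (s i); rewrite E eqxx.
- by rewrite emb_fun_g (emb_fun_out _ _ hx) => E; have := hx (s j); rewrite E eqxx.
- by rewrite (emb_fun_out _ _ hx) (emb_fun_out _ _ hy).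
Qed.

Definition emb s : {perm T} := perm (emb_fun_inj s).

Lemma emb_g s i : emb s (g i) = g (s i).
Proof. by rewrite permE emb_fun_g. Qed.

Lemma emb_out s x : (forall i, g i != x) -> emb s x = x.
Proof. by move=> h; rewrite permE emb_fun_out. Qed.

Lemma embM s t : emb (s * t)%g = (emb s * emb t)%g.
Proof.
apply/permP=> x; rewrite permM.
case: (imgP x) => [[i <-]|hx]; first by rewrite !emb_g permM.
by rewrite !emb_out.
Qed.

Lemma emb1 : emb 1%g = 1%g.
Proof.
apply/permP=> x; rewrite perm1.
case: (imgP x) => [[i <-]|hx]; first by rewrite emb_g perm1.
by rewrite emb_out.
Qed.

Lemma emb_tperm a b : emb (tperm a b) = tperm (g a) (g b).
Proof.
apply/permP=> x; case: (imgP x) => [[i <-]|hx].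
  by rewrite emb_g (inj_tperm _ _ _ ginj).
by rewrite emb_out // tpermD.
Qed.

Lemma odd_emb s : odd_perm (emb s) = odd_perm s.
Proof.
case: (prod_tpermP s) => ts -> dts.
rewrite (big_morph emb embM emb1).
under eq_bigr do rewrite emb_tperm.
rewrite -(big_map (fun t => (g t.1, g t.2)) xpredT (fun t => tperm t.1 t.2)).
rewrite !odd_perm_prod ?size_map //.
rewrite all_map; apply: sub_all dts => -[a b] /=.
by rewrite /dpair /= (inj_eq ginj).
Qed.

Lemma emb_inj : injective emb.
Proof.
move=> s t E; apply/permP=> i; apply: ginj.
by rewrite -!emb_g E.
Qed.
End Emb.
Arguments emb {I T g} ginj s.
Arguments emb_g {I T g} ginj s i.
Arguments emb_out {I T g ginj s x}.
Arguments emb_inj {I T g} ginj.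
Arguments imgP {I T} g x.
Arguments odd_emb {I T g} ginj s.

Section Minor.
Variable R : comNzRingType.

Definition pmin n (A : 'M[R]_n) (S : {set 'I_n}) : R :=
  \det (\matrix_(i < #|S|, j < #|S|) A (enum_val i) (enum_val j)).
Arguments pmin {n} A S.

Lemma fix_sum n (A : 'M[R]_n) (S : {set 'I_n}) :
  \sum_(s : 'S_n | [forall x in ~:S, s x == x])
     (-1) ^+ s * \prod_(x in S) A x (s x) = pmin A S.
Proof.
pose g := (fun i : 'I_#|S| => enum_val i : 'I_n).
have ginj : injective g by apply: enum_val_inj.
have E : forall s : 'S_n, [forall x in ~:S, s x == x] =
    (s \in [set emb ginj σ | σ in 'S_#|S|]).
  move=> s; apply/forallP/imsetP.
    move=> h.
    have sS : forall i, s (g i) \in S.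
      move=> i; apply: contraT => hn; have := h (s (g i)).
      rewrite in_setC hn /= (inj_eq perm_inj) => /eqP E.
      by move: hn; rewrite E /g enum_valP.
    pose f i := enum_rank_in (enum_valP i) (s (g i)).
    have fK i : g (f i) = s (g i) by rewrite /g /f enum_rankK_in.
    have finj : injective f.
      by move=> i j Eij; apply: ginj; apply: (@perm_inj _ s); rewrite -!fK Eij.
    exists (perm finj); first by [].
    apply/permP => x; case: (imgP g x) => [[i <-]|hx].
      by rewrite emb_g permE fK.
    rewrite emb_out //.
    have xS : x \notin S.
      by apply/negP => xS; have := hx (enum_rank_in xS x); rewrite /g enum_rankK_in // eqxx.
    by have := h x; rewrite in_setC xS /= => /eqP.
  case=> σ _ -> x; apply/implyP => xS; rewrite emb_out //.
  by move=> i; apply/eqP => Ei; move: xS; rewrite -Ei in_setC /g enum_valP.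
rewrite (eq_bigl _ _ E) big_imset /=; last by move=> ? ? _ _; apply: emb_inj.
rewrite /pmin /determinant; apply: eq_bigr => σ _.
rewrite odd_emb; congr (_ * _).
rewrite big_enum_val; apply: eq_bigr => i _.
by rewrite mxE (emb_g ginj).
Qed.

Lemma det_diag_expand n (A : 'M[R]_n) (D : 'I_n -> R) :
  \det (\matrix_(i, j) (A i j + (i == j)%:R * D i)) =
  \sum_(S : {set 'I_n}) (\prod_(i in ~:S) D i) * pmin A S.
Proof.
rewrite /determinant.
under eq_bigr => s _ do under eq_bigr => i _ do rewrite mxE.
under eq_bigr => s _ do rewrite bigA_distr big_distrr.
rewrite exchange_big; apply: eq_bigr => S _ /=.
rewrite -fix_sum mulr_sumr.
rewrite (bigID (fun s : 'S_n => [forall x in ~:S, s x == x])) /=.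
rewrite [X in _ + X]big1 ?addr0.
  apply: eq_bigr => s hs.
  rewrite (bigID (mem S)) /=.
  rewrite (eq_bigr (fun i => A i (s i))); last by move=> i ->.
  rewrite [X in _ * (_ * X)](eq_bigr D); last first.
    move=> i iS; have := forallP hs i; rewrite in_setC iS /= => /eqP ->.
    by rewrite eqxx mul1r (negbTE iS).
  rewrite [in RHS](eq_bigl (fun i => i \notin S)); last by move=> i; rewrite in_setC.
  by rewrite mulrA mulrC.
move=> s; rewrite negb_forall => /existsP [x]; rewrite negb_imply in_setC => /andP [xS sx].
rewrite (bigD1 x) //= (negbTE xS) eq_sym (negbTE sx) mul0r mul0r.
by rewrite mulr0.
Qed.
End Minor.

Section Border.
Variable R : comNzRingType.

Definition hatm n (M : 'M[R]_n.+1) : 'M[R]_n :=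
  \matrix_(i, j) M (lift ord0 i) (lift ord0 j).
Arguments hatm {n} M.

Lemma liftlift k (j : 'I_k.+1) (b : 'I_k) :
  lift (lift ord0 j) (lift ord0 b) = lift ord0 (lift j b) :> 'I_k.+2.
Proof. by apply/val_inj; rewrite /= /bump /= leq_add2l addnCA. Qed.

Lemma lift_ord0 k (j : 'I_k.+1) : lift (lift ord0 j) (ord0 : 'I_k.+1) = ord0 :> 'I_k.+2.
Proof. by apply/val_inj. Qed.

Lemma cof_border k (M : 'M[R]_(k.+2)) (j : 'I_k.+1) :
  cofactor M ord0 (lift ord0 j) =
  - \sum_i M (lift ord0 i) ord0 * cofactor (hatm M) i j.
Proof.
rewrite /cofactor (expand_det_col _ ord0) mulr_sumr -sumrN.
apply: eq_bigr => i _.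
rewrite !mxE lift_ord0 /cofactor.
have -> : row' i (col' ord0 (row' ord0 (col' (lift ord0 j) M))) =
          row' i (col' j (hatm M)).
  by apply/matrixP => a b; rewrite !mxE liftlift.
rewrite /= add0n addn0 exprD exprS; ring.
Qed.

Lemma det_border k (M : 'M[R]_(k.+2)) :
  \det M = M ord0 ord0 * \det (hatm M) -
    \sum_j \sum_i M ord0 (lift ord0 j) * (M (lift ord0 i) ord0 * cofactor (hatm M) i j).
Proof.
rewrite (expand_det_row _ ord0) big_ord_recl.
have -> : cofactor M ord0 ord0 = \det (hatm M).
  rewrite /cofactor add0n expr0 mul1r; congr (\det _).
  by apply/matrixP => a b; rewrite !mxE.
rewrite -sumrN; congr (_ + _); apply: eq_bigr => j _.
by rewrite cof_border -mulr_sumr mulrN.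
Qed.
End Border.

Section L5.
Variable F : fieldType.

Lemma size_det2 n (M : 'M[{poly F}]_n) :
  (forall i j, (size (M i j) <= 2)%N) -> (size (\det M) <= n.+1)%N.
Proof.
move=> hM; rewrite /determinant.
apply: leq_trans (size_sum _ _ _) _; apply/bigmax_leqP => s _.
rewrite size_Msign.
apply: leq_trans (size_poly_prod_leq _ _) _.
have : (\sum_(i < n) size (M i (s i)) <= \sum_(i < n) 2)%N.
  by apply: leq_sum => i _.
rewrite sum_nat_const card_ord => h; rewrite leq_subLR addnS ltnS; apply: leq_trans h _.
lia.
Qed.

Variable k : nat.
Variable H : 'M[F]_k.+1.
Let Pm : 'M[{poly F}]_k.+1 := 'X%:M + map_mx polyC H.

Lemma size_cof i j : (size (cofactor Pm i j) <= k.+1)%N.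
Proof.
rewrite /cofactor size_Msign; apply: size_det2 => a b.
rewrite !mxE; apply: leq_trans (size_polyD _ _) _.
rewrite geq_max size_polyC; apply/andP; split; last by case: (_ != 0).
by case: (_ == _); rewrite ?mulr1n ?mulr0n ?size_polyX ?size_poly0.
Qed.

Lemma detPm_size : size (\det Pm) = k.+2.
Proof.
have -> : Pm = char_poly_mx (- H).
  by rewrite /char_poly_mx map_mxN opprK.
exact: size_char_poly.
Qed.

Variable d : 'rV[F]_k.+1.
Let G (v : 'cV[F]_k.+1) : {poly F} :=
  (map_mx polyC d *m \adj Pm *m map_mx polyC v) 0 0.

Lemma size_G v : (size (G v) <= k.+1)%N.
Proof.
rewrite /G !mxE; elim/big_ind: _ => [|p q hp hq|i _].
- by rewrite size_poly0.
- by apply: leq_trans (size_polyD _ _) _; rewrite geq_max hp.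
rewrite !mxE mulrC mul_polyC; apply: leq_trans (size_scale_leq _ _) _.
elim/big_ind: _ => [|p q hp hq|j _].
- by rewrite size_poly0.
- by apply: leq_trans (size_polyD _ _) _; rewrite geq_max hp.
rewrite !mxE mul_polyC; apply: leq_trans (size_scale_leq _ _) _.
exact: size_cof.
Qed.

Lemma G_key v : 'X * G v + G (H *m v) = \det Pm * ((d *m v) 0 0)%:P.
Proof.
have E : Pm *m map_mx polyC v = 'X *: map_mx polyC v + map_mx polyC (H *m v).
  by rewrite mulmxDl mul_scalar_mx map_mxM.
have E2 : map_mx polyC d *m \adj Pm *m (Pm *m map_mx polyC v) =
          \det Pm *: map_mx polyC (d *m v).
  by rewrite mulmxA -(mulmxA _ (\adj Pm)) mul_adj_mx mul_mx_scalar -scalemxAl map_mxM.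
move/matrixP/(_ 0 0): E2.
rewrite E mulmxDr -scalemxAr /= !mxE => <-.
by rewrite /G !mxE.
Qed.

Lemma G_step {v} : G v = 0 -> G (H *m v) = 0 /\ (d *m v) 0 0 = 0.
Proof.
move=> Gv; have K := G_key v; rewrite Gv mulr0 add0r in K.
have [a0|an0] := eqVneq ((d *m v) 0 0) 0.
  by rewrite K a0 mulr0.
exfalso; have := size_G (H *m v).
by rewrite K mulrC mul_polyC size_scale // detPm_size ltnn.
Qed.

Lemma G_ind (c : 'cV[F]_k.+1) : G c = 0 ->
  forall i, (d *m (H ^+ i *m c)) 0 0 = 0.
Proof.
move=> Gc.
suff h : forall i, G (H ^+ i *m c) = 0 by move=> i; case: (G_step (h i)).
elim=> [|i IH]; first by rewrite expr0 mul1mx.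
by rewrite exprS -mulmxE -mulmxA; case: (G_step IH).
Qed.
End L5.

Lemma krylov_zero (R : numClosedFieldType) k (H : 'M[R]_k) (c : 'cV[R]_k) (d : 'rV[R]_k) :
  cyclic_vector H c -> (forall i, (d *m (H ^+ i *m c)) 0 0 = 0) -> d = 0.
Proof.
rewrite /cyclic_vector row_full_unit -unitmx_tr => hu hd.
have E : d *m (krylov H c)^T = 0.
  apply/matrixP => a j; rewrite !mxE (ord1 a).
  rewrite -[RHS](hd j) !mxE; apply: eq_bigr => i _; by rewrite !mxE.
by rewrite -(mulmxK hu d) E mul0mx.
Qed.

(* n = m.+1, so 2 <= n is 1 <= m *)
Theorem lemma2p4 (R : numClosedFieldType) (m : nat) (hm : (1 <= m)%N)
  (A B : 'M[R]_(m.+1)) :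
  in_G1 A -> in_G1 B -> pi_map A = pi_map B ->
  mxhat A = mxhat B -> firstcol A = firstcol B ->
  firstrow A = firstrow B.
Proof.
case: m hm A B => [//|k] _ A B [_ hA] _ hpi hH hc.
have hB1 : forall i j, B (lift ord0 i) (lift ord0 j) = A (lift ord0 i) (lift ord0 j).
  by move=> i j; move/matrixP/(_ i j): hH; rewrite !mxE.
have hc1 : forall i, B (lift ord0 i) ord0 = A (lift ord0 i) ord0.
  by move=> i; move/matrixP/(_ i ord0): hc; rewrite !mxE.
have h00 : B ord0 ord0 = A ord0 ord0.
  by move/(congr1 fst)/matrixP/(_ 0 0): hpi; rewrite !mxE /piX_coord /=.
have hX : forall j : nat, (2 <= j <= k.+2)%N ->
    \sum_(I : {set 'I_k.+2} | (#|I| == j) && (ord0 \in I)) pminor A I =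
    \sum_(I : {set 'I_k.+2} | (#|I| == j) && (ord0 \in I)) pminor B I.
  move=> j /andP [j2 jn].
  move/(congr1 fst)/matrixP/(_ 0 (inord j.-1)): hpi; rewrite !mxE /piX_coord inordK; last lia.
  have -> : j.-1.+1 = j by lia.
  by have -> : (j == 1%N) = false by lia.
have cardI : forall I : {set 'I_k.+2}, (#|I| <= k.+2)%N.
  by move=> I; apply: leq_trans (max_card _) _; rewrite card_ord.
have pos : forall I : {set 'I_k.+2}, ord0 \in I -> (0 < #|I|)%N.
  by move=> I h; apply/card_gt0P; exists ord0.
have hsum : forall j : nat,
    \sum_(I : {set 'I_k.+2} | (#|I| == j) && (ord0 \in I)) pminor A I =
    \sum_(I : {set 'I_k.+2} | (#|I| == j) && (ord0 \in I)) pminor B I.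
  move=> j; have [j1|j1] := eqVneq j 1%N.
    apply: eq_bigr => I /andP [I1 I0]; rewrite /pminor; congr (\det _).
    move: I1; rewrite j1 => /cards1P [x Ix].
    have memI : forall y, y \in I -> y = x by move=> y; rewrite Ix in_set1 => /eqP.
    have ev : forall i : 'I_#|I|, enum_val i = ord0.
      by move=> i; rewrite (memI _ (enum_valP i)) (memI _ I0).
    by apply/matrixP => a b; rewrite !mxE !ev h00.
  have [hj|hj] := boolP (2 <= j <= k.+2)%N; first exact: hX.
  have F0 : forall I : {set 'I_k.+2}, ((#|I| == j) && (ord0 \in I)) = false.
    move=> I; apply/negbTE/negP => /andP [/eqP Ij I0].
    by have := pos I I0; have := cardI I; move: hj; rewrite -Ij; lia.
  by rewrite !big_pred0.
pose Dp := fun i : 'I_k.+2 => if i == ord0 then 0 else ('X : {poly R}).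
pose AP := \matrix_(i, j) (map_mx polyC A i j + (i == j)%:R * Dp i).
pose BP := \matrix_(i, j) (map_mx polyC B i j + (i == j)%:R * Dp i).
have pmP : forall (M : 'M[R]_k.+2) S, @pmin _ _ (map_mx polyC M) S = (pminor M S)%:P.
  move=> M S; rewrite /pmin /pminor -(det_map_mx (@polyC R)); congr (\det _).
  by apply/matrixP => a b; rewrite !mxE.
have DP : forall S : {set 'I_k.+2}, \prod_(i in ~:S) Dp i =
    if ord0 \in S then 'X ^+ (k.+2 - #|S|) else 0.
  move=> S; case: ifP => h0.
    rewrite (eq_bigr (fun _ => 'X)); last first.
      by move=> i; rewrite in_setC /Dp; case: eqP => [->|//]; rewrite h0.
    by rewrite prodr_const cardsCs setCK card_ord.
  by rewrite (bigD1 ord0) /= ?in_setC ?h0 // /Dp eqxx mul0r.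
have detAB : \det AP = \det BP.
  rewrite !det_diag_expand.
  under eq_bigr do rewrite DP pmP.
  under [RHS]eq_bigr do rewrite DP pmP.
  apply/eqP; rewrite -subr_eq0 -sumrB; apply/eqP.
  rewrite (partition_big (fun S : {set 'I_k.+2} => (inord #|S| : 'I_k.+3)) xpredT) //=.
  apply: big1 => j _.
  rewrite (eq_bigl (fun S : {set 'I_k.+2} => #|S| == j)); last first.
    by move=> S /=; rewrite -val_eqE /= inordK // ltnS cardI.
  rewrite (eq_bigr (fun S : {set 'I_k.+2} => if ord0 \in S then 'X^(k.+2 - j) * (pminor A S - pminor B S)%:P else 0)); last first.
    by move=> S /eqP <-; case: ifP => _; rewrite ?mul0r ?subrr // rmorphB mulrBr.
  by rewrite -big_mkcondr /= -mulr_sumr -rmorph_sum sumrB hsum subrr rmorph0 mulr0.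
set H := mxhat A; set c := firstcol A.
set d := firstrow A - firstrow B.
pose Pm := 'X%:M + map_mx polyC H.
have hl : forall i : 'I_k.+1, (lift ord0 i == ord0) = false.
  by move=> i; rewrite eq_sym (negbTE (neq_lift _ _)).
have hll : forall i j : 'I_k.+1, (lift ord0 i == lift ord0 j) = (i == j).
  by move=> i j; rewrite (inj_eq (@lift_inj _ ord0)).
have hatA : @hatm _ _ AP = Pm.
  apply/matrixP => i j; rewrite !mxE /Dp hl hll.
  by case: (i == j); rewrite ?mulr1n ?mulr0n ?mul1r ?mul0r addrC ?addr0 ?add0r.
have hatB : @hatm _ _ BP = Pm.
  apply/matrixP => i j; rewrite !mxE /Dp hl hll hB1.
  by case: (i == j); rewrite ?mulr1n ?mulr0n ?mul1r ?mul0r addrC ?addr0 ?add0r.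
have eA : \det AP = (A ord0 ord0)%:P * \det Pm -
   \sum_j \sum_i (A ord0 (lift ord0 j))%:P * ((A (lift ord0 i) ord0)%:P * cofactor Pm i j).
  rewrite det_border hatA; congr (_ * _ - _).
    by rewrite !mxE /Dp eqxx mulr0 addr0.
  apply: eq_bigr => j _; apply: eq_bigr => i _.
  by rewrite !mxE /Dp hl eq_sym hl !mul0r !addr0.
have eB : \det BP = (A ord0 ord0)%:P * \det Pm -
   \sum_j \sum_i (B ord0 (lift ord0 j))%:P * ((A (lift ord0 i) ord0)%:P * cofactor Pm i j).
  rewrite det_border hatB; congr (_ * _ - _).
    by rewrite !mxE /Dp eqxx mulr0 addr0 h00.
  apply: eq_bigr => j _; apply: eq_bigr => i _.
  by rewrite !mxE /Dp hl eq_sym hl !mul0r !addr0 hc1.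
rewrite eA eB in detAB; move/subrI: detAB => eS.
have Gc : (map_mx polyC d *m \adj Pm *m map_mx polyC c) 0 0 = 0.
  transitivity ((\sum_j \sum_i (A ord0 (lift ord0 j))%:P *
        ((A (lift ord0 i) ord0)%:P * cofactor Pm i j)) -
     (\sum_j \sum_i (B ord0 (lift ord0 j))%:P *
        ((A (lift ord0 i) ord0)%:P * cofactor Pm i j))); last by rewrite eS subrr.
  rewrite !mxE; under eq_bigr do rewrite !mxE big_distrl.
  rewrite exchange_big -sumrB; apply: eq_bigr => j _; rewrite -sumrB.
  apply: eq_bigr => i _; rewrite !mxE rmorphB /=; ring.
have hd := @G_ind R k H d c Gc.
apply/eqP; rewrite -subr_eq0; apply/eqP.
exact: krylov_zero hA hd.
Qed.
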